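(* Let $\rho,\rho',\sigma$ be quantum states on a finite-dimensional Hilbert space such that $\rho$ and $\rho'$ both commute with $\sigma$ (but not necessarily with each other). Then there exists a unitary channel $\mathcal U$ such that (i) $[\rho,\mathcal U(\rho')]=0$, (ii) $D(\rho,\mathcal U(\rho'))\le D(\rho,\rho')$, and (iii) $\mathcal U(\rho')$ commutes with $\sigma$.
   Context: $D(\rho,\tau)=\frac12\|\rho-\tau\|_1$ is the trace distance; a unitary channel is a map $X\mapsto UXU^\dagger$ with $U$ unitary. *)

(* Defs.v *)
From HB Require Import structures.
From mathcomp Require Import all_boot all_order all_algebra.
Set Implicit Arguments. Unset Strict Implicit. Unset Printing Implicit Defensive.
Import Order.TTheory GRing.Theory Num.Theory.
Local Open Scope ring_scope.
Local Open Scope sesquilinear_scope.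

(* Quantum states on C^n, C an (abstract) numeric algebraically closed field,
   e.g. the complex numbers. Matrices act on row vectors (MathComp convention). *)

Definition adj (C : numClosedFieldType) m n (A : 'M[C]_(m, n)) : 'M[C]_(n, m) :=
  A ^t*.

Definition psd (C : numClosedFieldType) n (A : 'M[C]_n) : Prop :=
  adj A = A /\ forall v : 'rV[C]_n, 0 <= (v *m A *m adj v) 0 0.

Definition is_state (C : numClosedFieldType) n (rho : 'M[C]_n) : Prop :=
  psd rho /\ \tr rho = 1.

Definition commute_mx (C : numClosedFieldType) n (A B : 'M[C]_n) : Prop :=
  A *m B = B *m A.

Definition unitary_channel (C : numClosedFieldType) n (U : 'M[C]_n)
  (X : 'M[C]_n) : 'M[C]_n := U *m X *m adj U.

(* trace norm ||A||_1 = tr sqrt(A^dagger A) = sum of singular values, where the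
   eigenvalues of the (normal, PSD) matrix A^dagger A are given by the spectral
   decomposition of MathComp's spectral.v *)
Definition trace_norm (C : numClosedFieldType) n (A : 'M[C]_n) : C :=
  \sum_(i < n) sqrtC (spectral_diag (adj A *m A) 0 i).

Definition trace_dist (C : numClosedFieldType) n (rho tau : 'M[C]_n) : C :=
  2^-1 * trace_norm (rho - tau).

(* Main.v *)
Require Import Defs.
From HB Require Import structures.
From mathcomp Require Import all_boot all_order all_algebra all_fingroup.
From mathcomp Require Import ring.
Set Implicit Arguments. Unset Strict Implicit. Unset Printing Implicit Defensive.
Import Order.TTheory GRing.Theory Num.Theory Num.Def.
Local Open Scope ring_scope.
Local Open Scope sesquilinear_scope.



Section Basics.
Variable C : numClosedFieldType.

Definition dec n (Q : 'M[C]_n) (d : 'rV[C]_n) : 'M[C]_n := Q^t* *m diag_mx d *m Q.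
Definition realv n (d : 'rV[C]_n) := forall i, d 0 i \is Num.real.

Lemma unitary_tV n (Q : 'M[C]_n) : Q \is unitarymx -> Q^t* *m Q = 1%:M.
Proof. by move=> QU; rewrite -invmx_unitary // mulVmx // unitarymx_unit. Qed.

Lemma trmxC_mul m n p (A : 'M[C]_(m, n)) (B : 'M[C]_(n, p)) : (A *m B)^t* = B^t* *m A^t*.
Proof. by rewrite trmx_mul map_mxM. Qed.

Lemma diag_conj n (d : 'rV[C]_n) : (diag_mx d)^t* = diag_mx (map_mx conjC d).
Proof. by rewrite tr_diag_mx map_diag_mx. Qed.

Lemma realv_conj n (d : 'rV[C]_n) : realv d -> map_mx conjC d = d.
Proof. by move=> Hd; apply/rowP => i; rewrite mxE; apply/CrealP/Hd. Qed.

Lemma dec_adj n Q (d : 'rV[C]_n) : realv d -> (dec Q d)^t* = dec Q d.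
Proof. by move=> Hd; rewrite /dec !trmxC_mul trmxCK diag_conj realv_conj // mulmxA. Qed.

Lemma decD n Q (d e : 'rV[C]_n) : dec Q (d + e) = dec Q d + dec Q e.
Proof. by rewrite /dec raddfD mulmxDr mulmxDl. Qed.

Lemma decN n Q (d : 'rV[C]_n) : dec Q (- d) = - dec Q d.
Proof. by rewrite /dec raddfN mulmxN mulNmx. Qed.

Lemma decB n Q (d e : 'rV[C]_n) : dec Q (d - e) = dec Q d - dec Q e.
Proof. by rewrite decD decN. Qed.

Lemma decZ n Q a (d : 'rV[C]_n) : dec Q (a *: d) = a *: dec Q d.
Proof. by rewrite /dec linearZ /= -scalemxAr -scalemxAl. Qed.

Lemma decM n Q (d e : 'rV[C]_n) : Q \is unitarymx ->
  dec Q d *m dec Q e = dec Q (\row_i (d 0 i * e 0 i)).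
Proof.
move=> QU; rewrite /dec !mulmxA -[Q^t* *m _ *m Q *m Q^t*]mulmxA (unitarymxP QU) mulmx1.
rewrite -[_ *m diag_mx e]mulmxA.
congr (_ *m _ *m _); apply/matrixP => i j; rewrite mul_diag_mx !mxE.
by case: eqP => [->|]; rewrite ?mulr1n ?mulr0n ?mulr0.
Qed.

Lemma dec_comm n Q (d e : 'rV[C]_n) : Q \is unitarymx ->
  dec Q d *m dec Q e = dec Q e *m dec Q d.
Proof.
move=> QU; rewrite !decM //; congr dec; apply/rowP => i; by rewrite !mxE mulrC.
Qed.

Lemma dec_tr n Q (d : 'rV[C]_n) : Q \is unitarymx -> \tr (dec Q d) = \sum_i d 0 i.
Proof. by move=> QU; rewrite /dec mxtrace_mulC mulmxA (unitarymxP QU) mul1mx mxtrace_diag. Qed.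

End Basics.



Lemma index_enum_ord n : index_enum 'I_n = enum 'I_n.
Proof. by rewrite [index_enum _]unlock -enumT. Qed.

Section CP.
Variable C : numClosedFieldType.

Lemma char_poly_dec n (Q : 'M[C]_n) d : Q \is unitarymx ->
  char_poly (dec Q d) = \prod_i ('X - (d 0 i)%:P).
Proof.
move=> QU.
pose f := @map_mx C {poly C} (@polyC C) n n.
have e1 : f Q *m f (Q^t*) = 1%:M by rewrite -map_mxM (unitarymxP QU) map_mx1.
have e2 : f (Q^t*) *m f Q = 1%:M by rewrite -map_mxM unitary_tV // map_mx1.
have E : char_poly_mx (dec Q d) = f (Q^t*) *m char_poly_mx (diag_mx d) *m f Q.
  rewrite /char_poly_mx /dec mulmxBr mulmxBl !map_mxM.
  congr (_ - _).
  by rewrite scalar_mxC -mulmxA e2 mulmx1.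
rewrite /char_poly E !det_mulmx mulrC mulrA -det_mulmx e1 det1 mul1r.
rewrite -/(char_poly _) char_poly_trig ?diag_mx_is_trig //.
by apply: eq_bigr => i _; rewrite mxE eqxx mulr1n.
Qed.

Lemma dec_perm_eq n (P Q : 'M[C]_n) d e : P \is unitarymx -> Q \is unitarymx ->
  dec P d = dec Q e -> perm_eq [seq d 0 i | i <- enum 'I_n] [seq e 0 i | i <- enum 'I_n].
Proof.
move=> PU QU Hde; apply: prod_XsubC_eq.
by rewrite -index_enum_ord !big_map -(char_poly_dec d PU) Hde char_poly_dec.
Qed.

Lemma dec_sum_eq n (P Q : 'M[C]_n) d e (F : C -> C) : P \is unitarymx -> Q \is unitarymx ->
  dec P d = dec Q e -> \sum_i F (d 0 i) = \sum_i F (e 0 i).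
Proof.
move=> PU QU Hde; have := dec_perm_eq PU QU Hde.
move=> H.
have := @perm_big C (@GRing.add C) 0 C _ _ xpredT F H.
by rewrite -index_enum_ord !big_map.
Qed.

End CP.

Section TN.
Variable C : numClosedFieldType.

Lemma realv_mul n (h : 'rV[C]_n) : realv h -> realv (\row_i (h 0 i * h 0 i)).
Proof. by move=> Hh i; rewrite mxE rpredM. Qed.

Lemma trace_norm_dec n (Q : 'M[C]_n) h : Q \is unitarymx -> realv h ->
  trace_norm (dec Q h) = \sum_i `|h 0 i|.
Proof.
move=> QU Hh; rewrite /trace_norm /adj dec_adj // decM //.
set M := dec Q _.
have MN : M \is normalmx.
  by apply/normalmxP; rewrite /M dec_adj //; exact: realv_mul.
have := orthomx_spectralP MN.
rewrite invmx_unitary ?spectral_unitarymx // -/(dec _ _) => HM.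
rewrite (dec_sum_eq sqrtC (spectral_unitarymx M) QU (esym HM)).
apply: eq_bigr => i _; rewrite mxE -expr2 -real_normK ?Hh //.
by rewrite sqrCK ?normr_ge0.
Qed.

End TN.



Section JD.
Variable C : numClosedFieldType.

Lemma herm_trig_diag n (T : 'M[C]_n) : T^t* = T -> is_trig_mx T ->
  T = diag_mx (\row_i T i i) /\ realv (\row_i T i i).
Proof.
move=> TH /is_trig_mxP Tt; split; last first.
  move=> i; rewrite mxE; apply/CrealP.
  by have /matrixP /(_ i i) := TH; rewrite !mxE.
apply/matrixP => i j; rewrite !mxE.
have [->|nij] := eqVneq i j; first by rewrite mulr1n.
rewrite mulr0n; have [lt|] := ltnP i j; first by rewrite Tt.
rewrite leq_eqVlt eq_sym (negbTE (nij : (i : nat) != j)) /= => ltji.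
have /matrixP /(_ i j) := TH; rewrite !mxE => <-.
by rewrite Tt // conjC0.
Qed.

Lemma joint_diag n (A S : 'M[C]_n) : A^t* = A -> S^t* = S -> A *m S = S *m A ->
  exists Q a s, [/\ Q \is unitarymx, realv a, realv s, A = dec Q a & S = dec Q s].
Proof.
move=> AH SH AS; have [P PU /andP[tA tS]] := cotrigonalization2 AS.
rewrite /similar_to !conjymx // in tA tS.
have herm X : X^t* = X -> (P *m X *m P^t*)^t* = P *m X *m P^t*.
  by move=> XH; rewrite !trmxC_mul trmxCK XH mulmxA.
have back X : X = P^t* *m (P *m X *m P^t*) *m P.
  by rewrite !mulmxA unitary_tV // mul1mx -mulmxA unitary_tV // mulmx1.
have [EA RA] := herm_trig_diag (herm _ AH) tA.
have [ES RS] := herm_trig_diag (herm _ SH) tS.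
exists P, (\row_i (P *m A *m P^t*) i i), (\row_i (P *m S *m P^t*) i i); split => //.
  by rewrite /dec -EA -back.
by rewrite /dec -ES -back.
Qed.

End JD.



Section Sort.
Variable C : numClosedFieldType.

Lemma sort_perm n (k : 'I_n -> C) : (forall i, k i \is Num.real) ->
  exists p : 'S_n, forall i j : 'I_n, (i <= j)%N -> k (p j) <= k (p i).
Proof.
move=> Rk.
pose r := fun i j : 'I_n => k j <= k i.
pose s := sort r (enum 'I_n).
have Hs : size s == n by rewrite size_sort size_enum_ord.
pose t := Tuple Hs.
have su : uniq s by rewrite sort_uniq enum_uniq.
have f_inj : injective (fun i => tnth t i).
  move=> i j; rewrite (tnth_nth i) (tnth_nth i) /= => /eqP.
  rewrite nth_uniq ?(eqP Hs) ?ltn_ord // => /eqP; exact: val_inj.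
exists (perm f_inj) => i j lij; rewrite !permE (tnth_nth i) (tnth_nth i) /=.
have rtr : transitive r by move=> y x z; rewrite /r => h1 h2; apply: le_trans h2 h1.
have rrf : reflexive r by move=> x; rewrite /r lexx.
have rto : total r by move=> x y; rewrite /r real_leVge.
have := sorted_leq_nth rtr rrf i (sort_sorted rto (enum 'I_n)).
move=> H; apply: H; rewrite ?inE /= -/s ?(eqP Hs) ?ltn_ord //.
Qed.

End Sort.

Section Perm.
Variable C : numClosedFieldType.

Lemma perm_mxE n (p : 'S_n) i j : (perm_mx p : 'M[C]_n) i j = (p i == j)%:R.
Proof. by rewrite /perm_mx !mxE. Qed.

Lemma perm_mxC n (p : 'S_n) : (perm_mx p : 'M[C]_n)^t* = (perm_mx p)^T.
Proof. by apply/matrixP => i j; rewrite !mxE conjC_nat. Qed.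

Lemma perm_mx_TK n (p : 'S_n) : (perm_mx p : 'M[C]_n)^T *m perm_mx p = 1%:M.
Proof. by rewrite tr_perm_mx -perm_mxM mulVg perm_mx1. Qed.

Lemma perm_mx_KT n (p : 'S_n) : (perm_mx p : 'M[C]_n) *m (perm_mx p)^T = 1%:M.
Proof. by rewrite tr_perm_mx -perm_mxM mulgV perm_mx1. Qed.

Lemma perm_dec n (p : 'S_n) (Q : 'M[C]_n) d : Q \is unitarymx ->
  (perm_mx p *m Q) \is unitarymx /\ dec Q d = dec (perm_mx p *m Q) (\row_i d 0 (p i)).
Proof.
move=> QU; split.
  apply/unitarymxP; rewrite trmxC_mul mulmxA -[_ *m Q *m _]mulmxA (unitarymxP QU).
  by rewrite mulmx1 perm_mxC perm_mx_KT.
rewrite /dec trmxC_mul perm_mxC.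
have E : diag_mx (\row_i d 0 (p i)) *m perm_mx p = perm_mx p *m diag_mx d.
  apply/matrixP => i j; rewrite mul_diag_mx mul_mx_diag !mxE.
  by case: eqP => [->|]; rewrite ?mulr1 ?mul1r ?mulr0 ?mul0r.
by rewrite -!mulmxA (mulmxA (diag_mx _)) E -mulmxA (mulmxA (perm_mx p)^T) perm_mx_TK mul1mx.
Qed.

End Perm.



Section Weyl.
Variable C : numClosedFieldType.

Lemma exists_c n (M : 'M[C]_n) (k : 'I_n) : exists c : 'rV[C]_n,
  [/\ c != 0, (forall i : 'I_n, (k < i)%N -> c 0 i = 0) &
      (forall j : 'I_n, (j < k)%N -> (c *m M) 0 j = 0)].
Proof.
pose E : 'M[C]_(k.+1, n) := \matrix_(i, j) ((i : nat) == j)%:R.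
pose F : 'M[C]_(n, k) := \matrix_(i, j) ((i : nat) == j)%:R.
pose N := E *m M *m F.
have kN : kermx N != 0.
  rewrite -mxrank_eq0 mxrank_ker -lt0n subn_gt0.
  by apply: leq_ltn_trans (rank_leq_col N) _.
have [w /sub_kermxP wN wnz] := rowV0Pn kN.
have [l Hl] : exists l, w 0 l != 0.
  apply/existsP; apply: contraR wnz => /existsPn H; apply/eqP/rowP => l.
  by rewrite mxE; apply/eqP; rewrite -[_ == 0]negbK H.
exists (w *m E); split.
- have ln : (l < n)%N by apply: leq_trans (ltn_ord l) (ltn_ord k).
  apply/eqP => /rowP /(_ (Ordinal ln)); rewrite !mxE (bigD1 l) //= big1 ?addr0.
    by rewrite mxE eqxx mulr1 => /eqP; rewrite (negbTE Hl).
  move=> m ml; rewrite mxE; case: eqP => [Hm|]; last by rewrite mulr0.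
  by case/eqP: ml; apply: val_inj.
- move=> i ki; rewrite !mxE big1 // => m _; rewrite mxE.
  case: eqP => [Hm|]; last by rewrite mulr0.
  by move: ki; rewrite -Hm ltnNge -ltnS ltn_ord.
- move=> j jk; have H := congr1 (fun X : 'rV[C]_k => X 0 (Ordinal jk)) wN.
  rewrite /= /N !mulmxA mxE [RHS]mxE (bigD1 j) //= big1 ?addr0 in H.
    by rewrite !mxE /= eqxx mulr1 in H; rewrite !mxE.
  move=> m mj; rewrite [X in _ * X]mxE; case: eqP => [Hm|]; last by rewrite mulr0.
  by case/eqP: mj; apply: val_inj.
Qed.

Lemma norm2E n (w : 'rV[C]_n) : (w *m w^t*) 0 0 = \sum_i `|w 0 i| ^+ 2.
Proof. by rewrite mxE; apply: eq_bigr => i _; rewrite !mxE normCK. Qed.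

Lemma quad_dec n (Q : 'M[C]_n) d (v : 'rV[C]_n) :
  (v *m dec Q d *m v^t*) 0 0 = \sum_i d 0 i * `|(v *m Q^t*) 0 i| ^+ 2.
Proof.
have -> : v *m dec Q d *m v^t* = (v *m Q^t*) *m diag_mx d *m (v *m Q^t*)^t*.
  by rewrite /dec trmxC_mul trmxCK !mulmxA.
rewrite mxE; apply: eq_bigr => i _; rewrite mul_mx_diag !mxE normCK.
by rewrite mulrA [_ * d 0 i]mulrC.
Qed.

Lemma weyl n (P Q : 'M[C]_n) (x y : 'rV[C]_n) : P \is unitarymx -> Q \is unitarymx ->
  (forall i j : 'I_n, (i <= j)%N -> x 0 j <= x 0 i) ->
  (forall i j : 'I_n, (i <= j)%N -> y 0 j <= y 0 i) ->
  (forall v : 'rV_n, (v *m dec P x *m v^t*) 0 0 <= (v *m dec Q y *m v^t*) 0 0) ->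
  forall k, x 0 k <= y 0 k.
Proof.
move=> PU QU Hx Hy Hv k.
have [c [cnz c0 cM0]] := exists_c (P *m Q^t*) k.
pose v := c *m P.
have e1 : v *m P^t* = c by rewrite mulmxtVK.
have e2 : v *m Q^t* = c *m (P *m Q^t*) by rewrite mulmxA.
pose m := \sum_i `|c 0 i| ^+ 2.
have m0 : 0 < m.
  rewrite lt_def sumr_ge0 ?andbT => [|i _]; last by rewrite exprn_ge0 ?normr_ge0.
  apply/negP => /eqP /psumr_eq0P H; case/negP: cnz; apply/eqP/rowP => i.
  have := H (fun i _ => exprn_ge0 _ (normr_ge0 _)) i isT.
  by rewrite mxE => /eqP; rewrite expf_eq0 normr_eq0 /= => /eqP.
have MU : P *m Q^t* \is unitarymx by rewrite mul_unitarymx ?trmxC_unitary.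
have mE : \sum_i `|(c *m (P *m Q^t*)) 0 i| ^+ 2 = m.
  by rewrite /m -!norm2E trmxC_mul mulmxA mulmxtVK.
rewrite -(ler_pM2r m0).
apply: le_trans (_ : \sum_i x 0 i * `|c 0 i| ^+ 2 <= _).
  rewrite mulr_sumr; apply: ler_sum => i _.
  have [ki|ik] := ltnP k i; first by rewrite c0 // normr0 expr0n /= !mulr0.
  by rewrite ler_wpM2r ?exprn_ge0 ?normr_ge0 // Hx.
apply: le_trans (_ : \sum_i y 0 i * `|(c *m (P *m Q^t*)) 0 i| ^+ 2 <= _).
  by have := Hv v; rewrite !quad_dec e1 e2.
rewrite -mE mulr_sumr; apply: ler_sum => i _.
have [ik|ki] := ltnP i k; first by rewrite cM0 // normr0 expr0n /= !mulr0.
by rewrite ler_wpM2r ?exprn_ge0 ?normr_ge0 // Hy.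
Qed.

End Weyl.



Section Mirsky.
Variable C : numClosedFieldType.

Definition noninc n (d : 'rV[C]_n) := forall i j : 'I_n, (i <= j)%N -> d 0 j <= d 0 i.

Lemma adjD n (A B : 'M[C]_n) : (A + B)^t* = A^t* + B^t*.
Proof. by apply/matrixP => i j; rewrite !mxE rmorphD. Qed.

Lemma adjN n (A : 'M[C]_n) : (- A)^t* = - A^t*.
Proof. by apply/matrixP => i j; rewrite !mxE rmorphN. Qed.

Lemma herm_sorted n (X : 'M[C]_n) : X^t* = X ->
  exists Q c, [/\ Q \is unitarymx, realv c, noninc c & X = dec Q c].
Proof.
move=> XH; have [Q [c0 [s0 [QU Rc0 _ EX _]]]] := joint_diag XH XH erefl.
have [p Hp] := @sort_perm C n (fun i => c0 0 i) Rc0.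
have [QU' E'] := perm_dec p c0 QU.
exists (perm_mx p *m Q), (\row_i c0 0 (p i)); split => //.
- by move=> i; rewrite mxE.
- by move=> i j ij; rewrite !mxE; apply: Hp.
- by rewrite EX.
Qed.

Lemma quad_nonneg n (Q : 'M[C]_n) (d : 'rV[C]_n) (v : 'rV[C]_n) : (forall i, 0 <= d 0 i) ->
  0 <= (v *m dec Q d *m v^t*) 0 0.
Proof.
move=> Hd; rewrite quad_dec sumr_ge0 // => i _.
by rewrite mulr_ge0 ?exprn_ge0 ?normr_ge0.
Qed.

Lemma mirsky n (Pa Pb : 'M[C]_n) (a b : 'rV[C]_n) : Pa \is unitarymx -> Pb \is unitarymx ->
  realv a -> realv b -> noninc a -> noninc b ->
  \sum_i `|a 0 i - b 0 i| <= trace_norm (dec Pa a - dec Pb b).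
Proof.
move=> PaU PbU Ra Rb Na Nb.
set A := dec Pa a; set B := dec Pb b.
have HH : (A - B)^t* = A - B by rewrite adjD adjN !dec_adj.
have [Qh [h [_ [QhU Rh _ EH _]]]] := joint_diag HH HH erefl.
pose hm := \row_i ((`|h 0 i| - h 0 i) / 2%:R).
pose hp := \row_i ((`|h 0 i| + h 0 i) / 2%:R).
have hm0 : forall i, 0 <= hm 0 i.
  move=> i; rewrite mxE divr_ge0 ?ler0n // subr_ge0.
  by apply: real_ler_norm.
have hp0 : forall i, 0 <= hp 0 i.
  move=> i; rewrite mxE divr_ge0 ?ler0n //.
  rewrite -[X in _ + X]opprK subr_ge0 -normrN real_ler_norm // rpredN.
  exact: Rh.
have Rhm : realv hm by move=> i; apply: ger0_real.
have Rhp : realv hp by move=> i; apply: ger0_real.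
have hph : hp = hm + h.
  apply/rowP => i; rewrite !mxE.
  have two : (2%:R : C) != 0 by rewrite pnatr_eq0.
  by field.
set N := dec Qh hm; set P := dec Qh hp.
have ECA : A + N = B + P.
  have -> : B = A - dec Qh h by rewrite -EH opprB addrC subrK.
  by rewrite /P hph decD [_ + dec Qh h]addrC addrA subrK.
set Cm := A + N.
have CH : Cm^t* = Cm by rewrite adjD !dec_adj.
have [Qc [c [QcU Rc Nc EC]]] := herm_sorted CH.
have Hac : forall i, a 0 i <= c 0 i.
  apply: (weyl PaU QcU Na Nc) => v; rewrite -EC /Cm mulmxDr mulmxDl [X in _ <= X]mxE.
  by rewrite lerDl quad_nonneg.
have Hbc : forall i, b 0 i <= c 0 i.
  apply: (weyl PbU QcU Nb Nc) => v; rewrite -EC /Cm ECA mulmxDr mulmxDl [X in _ <= X]mxE.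
  by rewrite lerDl quad_nonneg.
apply: le_trans (_ : \sum_i ((c 0 i - b 0 i) + (c 0 i - a 0 i)) <= _).
  apply: ler_sum => i _.
  have -> : a 0 i - b 0 i = (c 0 i - b 0 i) - (c 0 i - a 0 i) by ring.
  apply: le_trans (ler_normB _ _) _.
  by rewrite !ger0_norm ?subr_ge0.
rewrite big_split /= !sumrB -(dec_tr c QcU) -(dec_tr b PbU) -(dec_tr a PaU) -EC -/A -/B.
have -> : \tr Cm - \tr B = \tr P by rewrite /Cm ECA mxtraceD addrC addKr.
have -> : \tr Cm - \tr A = \tr N by rewrite /Cm mxtraceD addrC addKr.
rewrite !dec_tr // -big_split /= EH trace_norm_dec //.
rewrite le_eqVlt; apply/orP; left; apply/eqP; apply: eq_bigr => i _.
by rewrite !mxE; field.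
Qed.

End Mirsky.



Section Final.
Variable C : numClosedFieldType.

Lemma le_sum1 n (F : 'I_n -> C) i : (forall j, 0 <= F j) -> F i <= \sum_j F j.
Proof. by move=> H; rewrite (bigD1 i) //= lerDl sumr_ge0. Qed.

Lemma bigK n (r s : 'rV[C]_n) : realv r -> realv s -> exists K0, 0 <= K0 /\
  forall K, K0 <= K -> forall i j, s 0 j < s 0 i -> r 0 j + K * s 0 j < r 0 i + K * s 0 i.
Proof.
move=> Rr Rs.
pose T i j := if s 0 j < s 0 i then (`|r 0 i| + `|r 0 j| + 1) / (s 0 i - s 0 j) else 0.
have T0 i j : 0 <= T i j.
  rewrite /T; case: ifP => // h; rewrite divr_ge0 ?subr_ge0 ?ltW //.
  by rewrite (lt_le_trans ltr01) // lerDr addr_ge0.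
exists (\sum_i \sum_j T i j); split.
  by apply: sumr_ge0 => i _; apply: sumr_ge0 => j _; exact: T0.
move=> K HK i j sji.
have TK : T i j <= K.
  apply: le_trans HK; apply: le_trans (@le_sum1 n (T i) j (T0 i)) _.
  by apply: (@le_sum1 n (fun i => \sum_j T i j)) => k; apply: sumr_ge0.
have d0 : 0 < s 0 i - s 0 j by rewrite subr_gt0.
have h1 : r 0 j - r 0 i < K * (s 0 i - s 0 j).
  apply: le_lt_trans (_ : r 0 j - r 0 i <= `|r 0 i| + `|r 0 j|) _.
    apply: le_trans (real_ler_norm (rpredB (Rr j) (Rr i))) _.
    by rewrite [`|r 0 i| + _]addrC; exact: ler_normB.
  apply: lt_le_trans (_ : `|r 0 i| + `|r 0 j| + 1 <= _); first by rewrite ltrDl ltr01.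
  have -> : `|r 0 i| + `|r 0 j| + 1 = T i j * (s 0 i - s 0 j).
    by rewrite /T sji divfK // lt0r_neq0.
  by rewrite ler_wpM2r // ltW.
rewrite -subr_gt0; rewrite -subr_gt0 in h1.
have -> : r 0 i + K * s 0 i - (r 0 j + K * s 0 j) = K * (s 0 i - s 0 j) - (r 0 j - r 0 i) by ring.
exact: h1.
Qed.

Lemma noninc_sorted n (s : 'rV[C]_n) : noninc s ->
  sorted (fun x y => y <= x) [seq s 0 i | i <- enum 'I_n].
Proof.
move=> Ns; rewrite sorted_map.
have := iota_sorted 0 n; rewrite -val_enum_ord sorted_map.
by apply: sub_sorted => i j ij; apply: Ns.
Qed.

Lemma nth_row_enum n (s : 'rV[C]_n) (k : 'I_n) :
  nth 0 [seq s 0 j | j <- enum 'I_n] k = s 0 k.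
Proof. rewrite (nth_map k). rewrite nth_ord_enum //. by rewrite size_enum_ord. Qed.

Lemma noninc_eq n (P Q : 'M[C]_n) s1 s2 : P \is unitarymx -> Q \is unitarymx ->
  noninc s1 -> noninc s2 -> dec P s1 = dec Q s2 -> s1 = s2.
Proof.
move=> PU QU N1 N2 E.
have tr : transitive (fun x y : C => y <= x) by move=> y x z h1 h2; apply: le_trans h2 h1.
have an : antisymmetric (fun x y : C => y <= x).
  by move=> x y h; apply: le_anti; rewrite andbC.
have H := sorted_eq tr an (noninc_sorted N1) (noninc_sorted N2) (dec_perm_eq PU QU E).
apply/rowP => i; have := congr1 (fun s => nth 0 s i) H.
by rewrite !nth_row_enum.
Qed.

Lemma sort_joint n (Q : 'M[C]_n) (r s : 'rV[C]_n) K : Q \is unitarymx ->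
  realv r -> realv s -> K \is Num.real ->
  (forall i j, s 0 j < s 0 i -> r 0 j + K * s 0 j < r 0 i + K * s 0 i) ->
  exists Q' r' s', [/\ Q' \is unitarymx, realv r' & realv s'] /\
     [/\ dec Q r = dec Q' r', dec Q s = dec Q' s', noninc (r' + K *: s') & noninc s'].
Proof.
move=> QU Rr Rs RK HK.
have Rk : forall i, r 0 i + K * s 0 i \is Num.real by move=> i; rewrite rpredD ?rpredM.
have [p Hp] := @sort_perm C n (fun i => r 0 i + K * s 0 i) Rk.
have [QU' Er] := perm_dec p r QU.
have [_ Es] := perm_dec p s QU.
exists (perm_mx p *m Q), (\row_i r 0 (p i)), (\row_i s 0 (p i)); split; split => //.
- by move=> i; rewrite mxE.
- by move=> i; rewrite mxE.
- by move=> i j ij; rewrite !mxE; apply: Hp.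
- move=> i j ij; rewrite !mxE real_leNgt //; apply/negP => lt.
  by have := HK _ _ lt; rewrite real_ltNge ?Rk // Hp.
Qed.

End Final.

Unset Implicit Arguments.

Theorem lemma23 (C : numClosedFieldType) (n : nat) (rho rho' sigma : 'M[C]_n) :
  is_state rho -> is_state rho' -> is_state sigma ->
  commute_mx rho sigma -> commute_mx rho' sigma ->
  exists U : 'M[C]_n,
    U \is unitarymx /\
    commute_mx rho (unitary_channel U rho') /\
    trace_dist rho (unitary_channel U rho') <= trace_dist rho rho' /\
    commute_mx (unitary_channel U rho') sigma.
Proof.
move=> [[rH _] _] [[r'H _] _] [[sH _] _] Crs Cr's.
have [Qa [r [s [QaU Rr Rs Er Es]]]] := joint_diag rH sH Crs.
have [Qb [r' [s' [QbU Rr' Rs' Er' Es']]]] := joint_diag r'H sH Cr's.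
have [Ka [Ka0 HKa]] := bigK Rr Rs.
have [Kb [Kb0 HKb]] := bigK Rr' Rs'.
pose K := Ka + Kb.
have RK : K \is Num.real by rewrite rpredD ?ger0_real.
have hKa : Ka <= K by rewrite lerDl.
have hKb : Kb <= K by rewrite lerDr.
have [Qa1 [r1 [s1 [[Qa1U Rr1 Rs1] [Er1 Es1 Nk1 Ns1]]]]] :=
  sort_joint QaU Rr Rs RK (HKa K hKa).
have [Qb1 [r2 [s2 [[Qb1U Rr2 Rs2] [Er2 Es2 Nk2 Ns2]]]]] :=
  sort_joint QbU Rr' Rs' RK (HKb K hKb).
rewrite Er1 in Er; rewrite Es1 in Es; rewrite Er2 in Er'; rewrite Es2 in Es'.
have s12 : s1 = s2 by apply: (noninc_eq Qa1U Qb1U Ns1 Ns2); rewrite -Es -Es'.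
rewrite -s12 in Nk2.
have chan : unitary_channel (Qa1^t* *m Qb1) rho' = dec Qa1 r2.
  by rewrite /unitary_channel /adj Er' /dec trmxC_mul trmxCK !mulmxA !mulmxtVK.
exists (Qa1^t* *m Qb1); rewrite chan; split; last split; last split.
- by rewrite mul_unitarymx ?trmxC_unitary.
- by rewrite /commute_mx Er dec_comm.
- rewrite /trace_dist ler_wpM2l ?invr_ge0 ?ler0n // Er Er' -decB.
  rewrite trace_norm_dec //; last by move=> i; rewrite !mxE rpredB.
  have Rk1 : realv (r1 + K *: s1) by move=> i; rewrite !mxE rpredD ?rpredM.
  have Rk2 : realv (r2 + K *: s1) by move=> i; rewrite !mxE rpredD ?rpredM.
  have := mirsky Qa1U Qb1U Rk1 Rk2 Nk1 Nk2.
  rewrite !decD !decZ -Es s12 Es' (addrC (dec Qb1 r2)) opprD addrA addrK.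
  congr (_ <= _); apply: eq_bigr => i _; rewrite !mxE; congr `|_|; ring.
- by rewrite /commute_mx Es dec_comm.
Qed.
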